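(* Consider the Hecke operators $T_p$ of level $9$ acting on $\mathcal{M}(9)$, for primes $p\ne3$. Then: (a) $JT_pJ=T_p$ for all primes $p\neq3$; (b) $T_pT^{1/3}=T^{1/3}T_p$ if $p\equiv1\bmod3$; (c) $T_pT^{1/3}=T^{-1/3}T_p$ if $p\equiv2\bmod3$.
   Context: $\mathcal{M}(9)$ denotes a space of Maass cusp forms on $\Gamma_0(9)$ with fixed Laplace eigenvalue (real-analytic $\Gamma_0(9)$-invariant eigenfunctions of $-y^2(\partial_x^2+\partial_y^2)$ on the upper half-plane, vanishing at cusps, square-integrable). The Hecke operator of level $9$ is $T_n\varphi(z)=n^{-1/2}\sum_{ad=n,\,a>0,\,(a,9)=1}\sum_{b\bmod d}\varphi(\frac{az+b}{d})$. The operators $J$, $T^{1/3}$, $T^{-1/3}$ act by $(J\varphi)(z)=\varphi(-\bar z)$, $(T^{\pm1/3}\varphi)(z)=\varphi(z\pm\frac13)$ (these preserve $\mathcal{M}(9)$). *)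

(* Defs.v *)
From Stdlib Require Import Reals ZArith Znumtheory List Arith.
From Coquelicot Require Import Coquelicot.
Open Scope R_scope.

Definition mob (a b c d : Z) (z : C) : C :=
  Cdiv (Cplus (Cmult (RtoC (IZR a)) z) (RtoC (IZR b)))
       (Cplus (Cmult (RtoC (IZR c)) z) (RtoC (IZR d))).

Definition reP (phi : C -> C) (x y : R) : R := Re (phi (x, y)).
Definition imP (phi : C -> C) (x y : R) : R := Im (phi (x, y)).

Definition real_analytic_at (f : R -> R -> R) (x0 y0 : R) : Prop :=
  exists r : R, 0 < r /\ exists a : nat -> nat -> R,
    forall x y, Rabs (x - x0) < r -> Rabs (y - y0) < r ->
      (forall m, ex_series (fun n => Rabs (a m n) * Rabs (x - x0) ^ m * Rabs (y - y0) ^ n)) /\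
      ex_series (fun m => Series (fun n => Rabs (a m n) * Rabs (x - x0) ^ m * Rabs (y - y0) ^ n)) /\
      f x y = Series (fun m => Series (fun n => a m n * (x - x0) ^ m * (y - y0) ^ n)).

Definition real_analytic_H (f : R -> R -> R) : Prop :=
  forall x0 y0, 0 < y0 -> real_analytic_at f x0 y0.

Definition laplace_eigen (lam : R) (f : R -> R -> R) : Prop :=
  forall x y, 0 < y ->
    - (y ^ 2) * (Derive (fun s => Derive (fun t => f t y) s) x
                 + Derive (fun s => Derive (fun t => f x t) s) y) = lam * f x y.

Definition gamma0_invariant (N : Z) (phi : C -> C) : Prop :=
  forall a b c d : Z, (a * d - b * c = 1)%Z -> (N | c)%Z ->
    forall z : C, 0 < Im z -> phi (mob a b c d z) = phi z.

Definition vanishes_at_cusps (phi : C -> C) : Prop :=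
  forall a b c d : Z, (a * d - b * c = 1)%Z ->
    forall eps : R, 0 < eps -> exists Y : R, forall x y : R, Y < y ->
      Cmod (phi (mob a b c d (x, y))) < eps.

(* square-integrability on Gamma_0(N)\H w.r.t. dx dy / y^2: since Gamma_0(N)
   has finite index in SL2(Z), the quotient is covered by finitely many
   translates gamma F of the standard fundamental domain
   F = {|x| <= 1/2, x^2 + y^2 >= 1}; so we require the integral of
   |phi o gamma|^2 over F to be finite for every gamma in SL2(Z)
   (expressed as a uniform bound on the truncated integrals of the
   non-negative continuous integrand). *)
Definition square_integrable (phi : C -> C) : Prop :=
  forall a b c d : Z, (a * d - b * c = 1)%Z ->
    exists M : R, forall Y : R,
      RInt (fun x => RInt (fun y => (Cmod (phi (mob a b c d (x, y)))) ^ 2 / y ^ 2)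
                          (sqrt (1 - x ^ 2)) (Rmax Y (sqrt (1 - x ^ 2))))
           (- (1 / 2)) (1 / 2) <= M.

Definition maass_cusp_form (N : Z) (lam : R) (phi : C -> C) : Prop :=
  real_analytic_H (reP phi) /\ real_analytic_H (imP phi) /\
  gamma0_invariant N phi /\
  laplace_eigen lam (reP phi) /\ laplace_eigen lam (imP phi) /\
  vanishes_at_cusps phi /\ square_integrable phi.

Definition csum (f : nat -> C) (l : list nat) : C :=
  fold_right Cplus (RtoC 0) (map f l).

(* Hecke operator of level 9:
   T_n phi(z) = n^{-1/2} sum_{ad = n, a > 0, (a,9) = 1} sum_{b mod d} phi((a z + b)/d) *)
Definition hecke9 (n : nat) (phi : C -> C) (z : C) : C :=
  Cmult (RtoC (/ sqrt (INR n)))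
    (csum (fun a =>
       if (Nat.eqb (n mod a) 0 && Nat.eqb (Nat.gcd a 9) 1)%bool then
         csum (fun b => phi (Cdiv (Cplus (Cmult (RtoC (INR a)) z) (RtoC (INR b)))
                                  (RtoC (INR (n / a)))))
              (seq 0 (n / a))
       else RtoC 0)
     (seq 1 n)).

Definition opJ (phi : C -> C) (z : C) : C := phi (Copp (Cconj z)).

Definition transl (t : R) (phi : C -> C) (z : C) : C := phi (Cplus z (RtoC t)).

(* Main.v *)
Require Import Defs.
From Stdlib Require Import Reals ZArith Znumtheory Lra Lia List Arith.
From Coquelicot Require Import Coquelicot.
Open Scope R_scope.

Lemma pair_eq (a b c d : R) : a = c -> b = d -> ((a, b) : C) = (c, d).
Proof. intros; subst; reflexivity. Qed.

Lemma cdiv_lem (a r q x y : R) : q <> 0 ->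
  Cdiv (Cplus (Cmult (RtoC a) (x, y)) (RtoC r)) (RtoC q) = ((a * x + r) / q, a * y / q).
Proof.
  intros Hq. unfold Cdiv, Cmult, Cplus, Cinv, RtoC; simpl.
  apply pair_eq; field; auto.
Qed.

Lemma per1 (phi : C -> C) : gamma0_invariant 9%Z phi ->
  forall (k : nat) (u y : R), 0 < y -> phi (u + INR k, y) = phi (u, y).
Proof.
  intros H k u y Hy.
  assert (E := H 1%Z (Z.of_nat k) 0%Z 1%Z ltac:(lia) (Z.divide_0_r 9) (u, y) Hy).
  rewrite <- E. f_equal. unfold mob, Cdiv, Cmult, Cplus, Cinv, RtoC; simpl.
  rewrite <- INR_IZR_INZ. apply pair_eq; field.
Qed.

Lemma csum_ext (f g : nat -> C) l : (forall b, f b = g b) -> csum f l = csum g l.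
Proof. intros H; unfold csum; rewrite (map_ext f g H); reflexivity. Qed.

Lemma csum_app f l1 l2 : csum f (l1 ++ l2) = Cplus (csum f l1) (csum f l2).
Proof.
  unfold csum; induction l1; simpl.
  - rewrite Cplus_0_l; reflexivity.
  - rewrite IHl1, Cplus_assoc; reflexivity.
Qed.

Lemma csum_shift f s n : csum f (seq (S s) n) = csum (fun b => f (S b)) (seq s n).
Proof. unfold csum; rewrite <- seq_shift, map_map; reflexivity. Qed.

Lemma csum_zero f l : (forall a, In a l -> f a = RtoC 0) -> csum f l = RtoC 0.
Proof.
  unfold csum; induction l; simpl; intros H; auto.
  rewrite H by auto. rewrite IHl by auto. apply Cplus_0_l.
Qed.

Section Per.
Variable G : R -> C.
Variable n : nat.
Hypothesis HG : forall t, G (t + INR n) = G t.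
Definition S_ (x : R) := csum (fun b => G (x + INR b)) (seq 0 n).

Lemma S_1 x : S_ (x + 1) = S_ x.
Proof.
  unfold S_. destruct n as [|m] eqn:En; [reflexivity|].
  transitivity (csum (fun b => G (x + INR b)) (seq 1 (S m))).
  { rewrite csum_shift. apply csum_ext. intro b. f_equal. rewrite S_INR; ring. }
  rewrite seq_S. rewrite csum_app. replace (1 + m)%nat with (S m) by lia.
  unfold csum at 2; simpl map. simpl fold_right. rewrite Cplus_0_r, HG.
  change (seq 0 (S m)) with (0 :: seq 1 m)%nat. unfold csum; simpl map; simpl fold_right. replace (x + 0) with x by ring.
  apply Cplus_comm.
Qed.

Lemma S_k k x : S_ (x + INR k) = S_ x.
Proof.
  induction k. { simpl; rewrite Rplus_0_r; auto. }
  rewrite S_INR, <- Rplus_assoc, S_1; auto.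
Qed.
End Per.

Lemma refl_gen (G : R -> C) n x :
  csum (fun b => G (x - INR b)) (seq 0 n) = csum (fun b => G (x + 1 - INR n + INR b)) (seq 0 n).
Proof.
  revert x; induction n; intros x; [reflexivity|].
  rewrite (seq_S n 0) at 2. rewrite csum_app. unfold csum at 3; cbn [map fold_right]. rewrite Cplus_0_r.
  change (seq 0 (S n)) with (0 :: seq 1 n)%nat. unfold csum at 1; cbn [map fold_right]. fold (csum (fun b => G (x - INR b)) (seq 1 n)).
  rewrite csum_shift.
  rewrite (csum_ext _ (fun b => G ((x - 1) - INR b))) by (intro b; apply f_equal; rewrite S_INR; ring).
  rewrite IHn. rewrite Cplus_comm. f_equal. apply csum_ext; intro b; apply f_equal; rewrite S_INR; ring.
  apply f_equal. rewrite S_INR; simpl (0+n)%nat; simpl (INR 0); ring.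
Qed.

Lemma refl_sum (G : R -> C) n : (1 <= n)%nat -> (forall t, G (t + INR n) = G t) ->
  csum (fun b => G (- INR b)) (seq 0 n) = csum (fun b => G (INR b)) (seq 0 n).
Proof.
  intros Hn HG.
  rewrite (csum_ext _ (fun b => G (0 - INR b))) by (intro; apply f_equal; ring).
  rewrite refl_gen.
  change (S_ G n (0 + 1 - INR n) = csum (fun b => G (INR b)) (seq 0 n)).
  replace (0 + 1 - INR n) with (0 - INR (n - 1)) by (rewrite minus_INR by lia; simpl; ring).
  rewrite <- (S_k G n HG (n-1)). unfold S_. apply csum_ext; intro b; apply f_equal; ring.
Qed.
Lemma ndiv_zdiv (a p : nat) : Nat.divide a p -> (Z.of_nat a | Z.of_nat p)%Z.
Proof. intros [k Hk]. exists (Z.of_nat k). subst. lia. Qed.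

Lemma gcd_p9 (p : nat) : prime (Z.of_nat p) -> p <> 3%nat -> Nat.gcd p 9 = 1%nat.
Proof.
  intros hp hp3. assert (H2 := prime_ge_2 _ hp).
  assert (Hg := ndiv_zdiv _ _ (Nat.gcd_divide_l p 9)).
  destruct (prime_divisors _ hp _ Hg) as [E|[E|[E|E]]]; try lia.
  exfalso. assert (Hp9 := ndiv_zdiv _ _ (Nat.gcd_divide_r p 9)).
  rewrite E in Hp9. change (Z.of_nat 9) with (3*3)%Z in Hp9.
  destruct (prime_mult _ hp _ _ Hp9) as [D|D];
  assert (Hle := Z.divide_pos_le _ 3 ltac:(lia) D);
  assert (p = 2%nat) by lia; subst; destruct D as [k Hk]; lia.
Qed.

Lemma mod_nz (p a : nat) : prime (Z.of_nat p) -> (2 <= a < p)%nat -> Nat.eqb (p mod a) 0 = false.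
Proof.
  intros hp Ha. apply Nat.eqb_neq. intro E.
  assert (D : Nat.divide a p). { exists (p / a)%nat. rewrite (Nat.div_mod_eq p a) at 1. lia. }
  destruct (prime_divisors _ hp _ (ndiv_zdiv _ _ D)) as [E'|[E'|[E'|E']]]; lia.
Qed.

Lemma hecke_prime (p : nat) (psi : C -> C) (z : C) : prime (Z.of_nat p) -> p <> 3%nat ->
  hecke9 p psi z = Cmult (RtoC (/ sqrt (INR p)))
    (Cplus (csum (fun b => psi (Cdiv (Cplus (Cmult (RtoC (INR 1)) z) (RtoC (INR b))) (RtoC (INR p)))) (seq 0 p))
           (psi (Cdiv (Cplus (Cmult (RtoC (INR p)) z) (RtoC (INR 0))) (RtoC (INR 1))))).
Proof.
  intros hp hp3. assert (H2 := prime_ge_2 _ hp). assert (Hg := gcd_p9 p hp hp3).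
  unfold hecke9. f_equal.
  destruct p as [|[|m]]; try (simpl in H2; lia).
  change (seq 1 (S (S m))) with (1%nat :: seq 2 (S m)). rewrite seq_S.
  change (1%nat :: seq 2 m ++ (2 + m)%nat :: nil) with ((1%nat :: nil) ++ seq 2 m ++ (2 + m)%nat :: nil).
  rewrite !csum_app. rewrite (csum_zero _ (seq 2 m)).
  2:{ intros a Ha. apply in_seq in Ha. rewrite mod_nz by (auto; lia). reflexivity. }
  replace (2 + m)%nat with (S (S m)) by lia.
  unfold csum at 1 3. cbn [map fold_right].
  rewrite Nat.mod_1_r, Nat.div_1_r, Nat.mod_same, Nat.div_same, Hg by lia. cbn [Nat.eqb andb Nat.gcd].
  change (seq 0 1) with (0%nat :: nil). unfold csum at 2. cbn [map fold_right].
  rewrite !Cplus_0_r, Cplus_0_l. reflexivity.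
Qed.

Lemma Gper (phi : C -> C) (p : nat) (x y : R) : gamma0_invariant 9%Z phi -> 0 < y -> 0 < INR p ->
  forall t, phi ((x + (t + INR p)) / INR p, y / INR p) = phi ((x + t) / INR p, y / INR p).
Proof.
  intros H Hy Hp t.
  replace ((x + (t + INR p)) / INR p) with ((x + t) / INR p + INR 1) by (simpl; field; lra).
  apply per1; auto. apply Rdiv_lt_0_compat; auto.
Qed.

Theorem lemma6p1 (lam : R) (phi : C -> C) (Hphi : maass_cusp_form 9%Z lam phi)
  (p : nat) (hp : prime (Z.of_nat p)) (hp3 : p <> 3%nat) :
  (forall z : C, 0 < Im z -> opJ (hecke9 p (opJ phi)) z = hecke9 p phi z) /\
  ((p mod 3 = 1)%nat -> forall z : C, 0 < Im z ->
      hecke9 p (transl (1 / 3) phi) z = transl (1 / 3) (hecke9 p phi) z) /\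
  ((p mod 3 = 2)%nat -> forall z : C, 0 < Im z ->
      hecke9 p (transl (1 / 3) phi) z = transl (- (1 / 3)) (hecke9 p phi) z).
Proof.
  destruct Hphi as (_ & _ & Hinv & _).
  assert (H2 : (2 <= p)%nat) by (assert (X := prime_ge_2 _ hp); lia).
  assert (Hp : 0 < INR p) by (apply lt_0_INR; lia).
  assert (Hp0 : INR p <> 0) by lra.
  assert (H10 : INR 1 <> 0) by (simpl; lra).
  split; [|split].
  - intros [x y] Hy; simpl in Hy. unfold opJ. rewrite !hecke_prime by auto.
    change (Copp (Cconj (x, y))) with ((- x, - - y) : C).
    f_equal. f_equal.
    + set (G := fun t => phi ((x + t) / INR p, y / INR p)).
      rewrite (csum_ext _ (fun b => G (- INR b))).
      2:{ intro b. cbv beta. rewrite cdiv_lem by auto. change (INR 1) with 1. unfold G. apply f_equal.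
          unfold Copp, Cconj; simpl; apply pair_eq; field; auto. }
      rewrite (csum_ext (fun b => phi _) (fun b => G (INR b))).
      2:{ intro b. cbv beta. rewrite cdiv_lem by auto. change (INR 1) with 1. unfold G. apply f_equal.
          apply pair_eq; field; auto. }
      apply refl_sum; [lia|]. intro t. unfold G. rewrite <- Rplus_assoc.
      replace (x + t + INR p) with (x + (t + INR p)) by ring. apply Gper; auto.
    + rewrite !cdiv_lem by auto. apply f_equal.
      unfold Copp, Cconj; simpl; apply pair_eq; field.
  - intros Hmod [x y] Hy; simpl in Hy. rewrite (hecke_prime p (transl (1/3) phi)) by auto. unfold transl; cbv beta.
    replace (Cplus (x, y) (RtoC (1/3))) with ((x + 1/3, y) : C)
      by (unfold Cplus, RtoC; simpl; apply pair_eq; ring).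
    rewrite (hecke_prime p phi) by auto.
    set (k := (p / 3)%nat).
    assert (Hk : INR p = 3 * INR k + 1).
    { assert (E := Nat.div_mod_eq p 3). rewrite Hmod in E. fold k in E.
      rewrite E, plus_INR, mult_INR. simpl. ring. }
    f_equal. f_equal.
    + set (G := fun t => phi ((x + 1/3 + t) / INR p, y / INR p)).
      assert (HG : forall t, G (t + INR p) = G t).
      { intro t. unfold G. replace (x + 1/3 + (t + INR p)) with (x + 1/3 + t + INR p) by ring.
        replace (x + 1/3 + t) with (x + (1/3 + t)) by ring.
        replace (x + (1/3 + t) + INR p) with (x + ((1/3 + t) + INR p)) by ring.
        apply Gper; auto. }
      rewrite (csum_ext _ (fun b => G (INR k + INR b))).
      2:{ intro b. cbv beta. rewrite cdiv_lem by auto. change (INR 1) with 1. unfold G. apply f_equal.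
          unfold Cplus, RtoC; cbn [fst snd]. apply pair_eq; [|field; auto].
          apply (Rmult_eq_reg_r (INR p)); [|auto]. field_simplify; auto. rewrite Hk. field. }
      transitivity (S_ G p (0 + INR k)); [rewrite Rplus_0_l; reflexivity|].
      rewrite (S_k G p HG k 0). unfold S_. apply csum_ext.
      intro b. cbv beta. rewrite cdiv_lem by auto. change (INR 1) with 1. unfold G. apply f_equal.
          apply pair_eq; field; auto.
    + rewrite !cdiv_lem by auto.
      replace (Cplus ((INR p * x + INR 0) / INR 1, INR p * y / INR 1) (RtoC (1/3)))
        with ((INR p * x + 1/3, INR p * y) : C)
        by (unfold Cplus, RtoC; simpl; apply pair_eq; field).
      replace ((INR p * (x + 1/3) + INR 0) / INR 1, INR p * y / INR 1)
        with ((INR p * x + 1/3 + INR k, INR p * y) : C)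
        by (simpl; apply pair_eq; [rewrite Hk; field | field]).
      rewrite per1; auto. apply Rmult_lt_0_compat; auto.
  - intros Hmod [x y] Hy; simpl in Hy. rewrite (hecke_prime p (transl (1/3) phi)) by auto. unfold transl; cbv beta.
    replace (Cplus (x, y) (RtoC (- (1/3)))) with ((x - 1/3, y) : C)
      by (unfold Cplus, RtoC; simpl; apply pair_eq; ring).
    rewrite (hecke_prime p phi) by auto.
    set (k := (p / 3)%nat).
    assert (Hk : INR p = 3 * INR k + 2).
    { assert (E := Nat.div_mod_eq p 3). rewrite Hmod in E. fold k in E.
      rewrite E, plus_INR, mult_INR. simpl. ring. }
    f_equal. f_equal.
    + set (G := fun t => phi ((x - 1/3 + t) / INR p, y / INR p)).
      assert (HG : forall t, G (t + INR p) = G t).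
      { intro t. unfold G.
        replace (x - 1/3 + (t + INR p)) with (x + ((- (1/3) + t) + INR p)) by ring.
        replace (x - 1/3 + t) with (x + (- (1/3) + t)) by ring.
        apply Gper; auto. }
      rewrite (csum_ext _ (fun b => G (INR (S k) + INR b))).
      2:{ intro b. cbv beta. rewrite cdiv_lem by auto. change (INR 1) with 1. unfold G. apply f_equal.
          unfold Cplus, RtoC; cbn [fst snd]. apply pair_eq; [|field; auto].
          apply (Rmult_eq_reg_r (INR p)); [|auto]. field_simplify; auto. rewrite S_INR, Hk. field. }
      transitivity (S_ G p (0 + INR (S k))); [rewrite Rplus_0_l; reflexivity|].
      rewrite (S_k G p HG (S k) 0). unfold S_. apply csum_ext.
      intro b. cbv beta. rewrite cdiv_lem by auto. change (INR 1) with 1. unfold G. apply f_equal.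
          apply pair_eq; field; auto.
    + rewrite !cdiv_lem by auto.
      replace (Cplus ((INR p * x + INR 0) / INR 1, INR p * y / INR 1) (RtoC (1/3)))
        with ((INR p * (x - 1/3) + INR (S k), INR p * y) : C)
        by (unfold Cplus, RtoC; cbn [fst snd]; rewrite S_INR; change (INR 1) with 1; change (INR 0) with 0; apply pair_eq; [rewrite Hk; field | field]).
      rewrite per1; auto. 2: apply Rmult_lt_0_compat; auto.
      apply f_equal. change (INR 1) with 1; change (INR 0) with 0; apply pair_eq; field.
Qed.
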